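(* Let $\mathbf{P}=(\mathbf{P}^{(0)},\mathbf{P}^{(1)},\ldots,\mathbf{P}^{(K_1)})$ be a $(K_1,K_2;F;Z_1,Z_2;\mathcal{S}_\mathrm{m},\mathcal{S}_1,\ldots,\mathcal{S}_{K_1})$ HPDA. Then for every $N\ge K_1K_2$ there exists an $F$-division coded caching scheme with uncoded placement for the $(K_1,K_2;M_1,M_2;N)$ hierarchical caching system with $$\frac{M_1}{N}=\frac{Z_1}{F},\qquad \frac{M_2}{N}=\frac{Z_2}{F},$$ and transmission loads $$R_1=\frac{\left|\bigcup_{k_1=1}^{K_1}\mathcal{S}_{k_1}\right|-|\mathcal{S}_\mathrm{m}|}{F},\qquad R_2=\max_{k_1\in[K_1]}\frac{|\mathcal{S}_{k_1}|}{F}.$$ In this scheme mirror site $k_1$ caches packet $W_{n,j}$ of every file iff $p^{(0)}_{j,k_1}=*$, and user $U_{k_1,k_2}$ caches $W_{n,j}$ of every file iff $p^{(k_1)}_{j,k_2}=*$.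
   Context: Notation: $[a]=\{1,\ldots,a\}$, $[a:b]=\{a,\ldots,b\}$. PDA. For positive integers $K,F,Z,S$ and an integer set $\mathcal{S}$ with $|\mathcal{S}|=S$, an $F\times K$ array $\mathbf{Q}=(q_{j,k})$ with entries in $\{*\}\cup\mathcal{S}$ is a $(K,F,Z,S)$ placement delivery array (PDA) (over $\mathcal{S}$; by default $\mathcal{S}=[S]$) if: (C1) the symbol $*$ appears exactly $Z$ times in each column; (C2) each integer of $\mathcal{S}$ occurs at least once in the array; (C3) for two distinct entries $q_{j_1,k_1}=q_{j_2,k_2}=s$ with $s$ an integer, we have $j_1\ne j_2$, $k_1\ne k_2$, and $q_{j_1,k_2}=q_{j_2,k_1}=*$. HPDA. Let $K_1,K_2,F,Z_1,Z_2$ be positive integers with $Z_1<F$, $Z_2<F$, and let $\mathcal{S}_\mathrm{m},\mathcal{S}_1,\ldots,\mathcal{S}_{K_1}$ be sets of integers. An $F\times(K_1+K_1K_2)$ array $\mathbf{P}=(\mathbf{P}^{(0)},\mathbf{P}^{(1)},\ldots,\mathbf{P}^{(K_1)})$, where $\mathbf{P}^{(0)}=(p^{(0)}_{j,k_1})_{j\in[F],k_1\in[K_1]}$ has every entry equal to $*$ or to ''null'' (blank), and for each $k_1\in[K_1]$, $\mathbf{P}^{(k_1)}=(p^{(k_1)}_{j,k_2})_{j\in[F],k_2\in[K_2]}$ has entries in $\{*\}\cup\mathcal{S}_{k_1}$, is a $(K_1,K_2;F;Z_1,Z_2;\mathcal{S}_\mathrm{m},\mathcal{S}_1,\ldots,\mathcal{S}_{K_1})$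 hierarchical placement delivery array (HPDA) if: (B1) each column of $\mathbf{P}^{(0)}$ contains exactly $Z_1$ stars; (B2) for each $k_1\in[K_1]$, $\mathbf{P}^{(k_1)}$ is a $(K_2,F,Z_2,|\mathcal{S}_{k_1}|)$ PDA over $\mathcal{S}_{k_1}$; (B3) each integer $s\in\mathcal{S}_\mathrm{m}$ occurs in exactly one of the subarrays $\mathbf{P}^{(1)},\ldots,\mathbf{P}^{(K_1)}$, and whenever $p^{(k_1)}_{j,k_2}=s\in\mathcal{S}_\mathrm{m}$ we have $p^{(0)}_{j,k_1}=*$; (B4) for any $k_1\ne k_1'\in[K_1]$, $j,j'\in[F]$, $k_2,k_2'\in[K_2]$ with $p^{(k_1)}_{j,k_2}=p^{(k_1')}_{j',k_2'}$ an integer: if $p^{(k_1)}_{j',k_2}$ is an integer then $p^{(0)}_{j',k_1}=*$; and if $p^{(k_1')}_{j,k_2'}$ is an integer then $p^{(0)}_{j,k_1'}=*$. Hierarchical caching model $(K_1,K_2;M_1,M_2;N)$. A server stores $N$ independent files $W_1,\ldots,W_N$, each uniformly distributed on $B$ bits. There are $K_1$ mirror sites, each with a cache of $M_1B$ bits, and $K_1K_2$ users $U_{k_1,k_2}$ ($k_1\in[K_1]$, $k_2\in[K_2]$), each with a cache of $M_2B$ bits; user $U_{k_1,k_2}$ is attached to mirror site $k_1$. The server reaches all mirror sites through one error-free broadcast link; mirror site $k_1$ reaches its $K_2$ attached users through an error-free broadcast link. An $F$-division scheme with uncoded placement ($F\mid B$): each file $W_n$ is split into $F$ packets $W_{n,1},\ldots,W_{n,F}$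 of $B/F$ bits. In the placement phase (without knowledge of demands) mirror site $k_1$ stores a set $\mathcal{Z}_{k_1}$ of packets of total size at most $M_1B$ bits and user $U_{k_1,k_2}$ stores a set $\mathcal{Z}_{(k_1,k_2)}$ of packets of total size at most $M_2B$ bits. In the delivery phase, given a demand vector $\mathbf{d}=(d_{k_1,k_2})\in[N]^{K_1K_2}$, the server broadcasts to the mirror sites a message $X$ consisting of $S(\mathbf{d})$ packet-sized symbols, a function of the files and $\mathbf{d}$; each mirror site $k_1$ broadcasts to its attached users a message $X_{k_1}$ of $S_{k_1}(\mathbf{d})$ packet-sized symbols, a function of $X$, $\mathcal{Z}_{k_1}$ and $\mathbf{d}$; each user $U_{k_1,k_2}$ must recover $W_{d_{k_1,k_2}}$ from $X_{k_1}$, $\mathcal{Z}_{(k_1,k_2)}$ and $\mathbf{d}$. The loads are $R_1=\max_{\mathbf{d}}S(\mathbf{d})/F$ and $R_2=\max_{k_1,\mathbf{d}}S_{k_1}(\mathbf{d})/F$. *)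

(* Defs.v *)
From HB Require Import structures.
From mathcomp Require Import all_boot all_order all_algebra.
From mathcomp Require Import finmap.
Set Implicit Arguments. Unset Strict Implicit. Unset Printing Implicit Defensive.
Import Order.TTheory GRing.Theory Num.Theory.

Local Open Scope fset_scope.

(* An entry of a (H)PDA subarray: [None] is the symbol *, [Some s] the integer s. *)

Definition is_PDA (K F Z : nat) (Sset : {fset int})
    (Q : 'I_F -> 'I_K -> option int) : Prop :=
  [/\ (0 < K)%N, (0 < F)%N, (0 < Z)%N & (0 < #|` Sset|)%N] /\
  (forall j k s, Q j k = Some s -> s \in Sset) /\
  (forall k : 'I_K, #|[set j : 'I_F | Q j k == None]| = Z) /\
  (forall s, s \in Sset -> exists j k, Q j k = Some s) /\
  (* C3 *)
  (forall (j1 j2 : 'I_F) (k1 k2 : 'I_K) (s : int),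
      Q j1 k1 = Some s -> Q j2 k2 = Some s -> (j1, k1) != (j2, k2) ->
      [/\ j1 != j2, k1 != k2, Q j1 k2 = None & Q j2 k1 = None]).

(* (K1,K2;F;Z1,Z2;Sm,S_1,...,S_K1) hierarchical placement delivery array.
   P0 j k1 = true means p^(0)_{j,k1} = *, false means "null".
   P k1 j k2 = p^(k1)_{j,k2}. *)
Definition is_HPDA (K1 K2 F Z1 Z2 : nat) (Sm : {fset int})
    (Ss : 'I_K1 -> {fset int}) (P0 : 'I_F -> 'I_K1 -> bool)
    (P : 'I_K1 -> 'I_F -> 'I_K2 -> option int) : Prop :=
  [/\ (0 < K1)%N, (0 < K2)%N, (0 < F)%N, (0 < Z1)%N & (0 < Z2)%N] /\
  (Z1 < F)%N /\ (Z2 < F)%N /\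
  (forall k1 : 'I_K1, #|[set j : 'I_F | P0 j k1]| = Z1) /\
  (forall k1 : 'I_K1, is_PDA Z2 (Ss k1) (P k1)) /\
  (* B3 *)
  (forall s, s \in Sm -> exists! k1 : 'I_K1, exists j k2, P k1 j k2 = Some s) /\
  (forall k1 j k2 s, P k1 j k2 = Some s -> s \in Sm -> P0 j k1) /\
  (* B4 *)
  (forall (k1 k1' : 'I_K1) (j j' : 'I_F) (k2 k2' : 'I_K2) (s : int),
      k1 != k1' -> P k1 j k2 = Some s -> P k1' j' k2' = Some s ->
      ((exists t, P k1 j' k2 = Some t) -> P0 j' k1) /\
      ((exists t, P k1' j k2' = Some t) -> P0 j k1')).

(* A packet: B/F bits (L = B/F). *)
Definition packet (L : nat) := 'rV['F_2]_L.

Definition files (N F L : nat) := 'I_N -> 'I_F -> packet L.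

Definition demand (K1 K2 N : nat) := {ffun 'I_K1 * 'I_K2 -> 'I_N}.

Definition agree_on (N F L : nat) (Z : {set 'I_N * 'I_F}) (W W' : files N F L) :=
  forall p, p \in Z -> W p.1 p.2 = W' p.1 p.2.

Record hscheme (K1 K2 N F L : nat) := HScheme {
  ZM : 'I_K1 -> {set 'I_N * 'I_F};
  ZU : 'I_K1 -> 'I_K2 -> {set 'I_N * 'I_F};
  S1 : demand K1 K2 N -> nat;
  S2 : 'I_K1 -> demand K1 K2 N -> nat;
  enc : forall d, files N F L -> 'I_(S1 d) -> packet L;
  (* mirror message X_{k1}, from X, the mirror cache (via files) and d *)
  mir : forall k1 d, ('I_(S1 d) -> packet L) -> files N F L ->
                     'I_(S2 k1 d) -> packet L;
  (* decoder of user U_{k1,k2}, from X_{k1}, its cache (via files) and d *)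
  dec : forall (k1 : 'I_K1) (k2 : 'I_K2) d, ('I_(S2 k1 d) -> packet L) -> files N F L ->
                        'I_F -> packet L
}.

Arguments enc {K1 K2 N F L} h d W _.
Arguments mir {K1 K2 N F L} h k1 d X W _.
Arguments dec {K1 K2 N F L} h k1 k2 d Y W _.

Local Open Scope ring_scope.

(* Validity: memory constraints (in bits, B = F*L), dependence of mirror
   messages / decoders only on the respective cache contents, and
   zero-error recovery of the requested file for every realization of the
   files (files are uniform, so recovery w.p. 1 = recovery for all
   realizations). *)
Definition valid_hscheme (K1 K2 N F L : nat) (M1 M2 : rat)
    (sc : hscheme K1 K2 N F L) : Prop :=
  (forall k1, ((#|ZM sc k1| * L)%N%:R : rat) <= M1 * (F * L)%N%:R) /\
  (forall k1 k2, ((#|ZU sc k1 k2| * L)%N%:R : rat) <= M2 * (F * L)%N%:R) /\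
  (forall k1 d X W W', agree_on (ZM sc k1) W W' ->
       mir sc k1 d X W = mir sc k1 d X W') /\
  (forall k1 k2 d Y W W', agree_on (ZU sc k1 k2) W W' ->
       dec sc k1 k2 d Y W = dec sc k1 k2 d Y W') /\
  (forall d (W : files N F L) k1 k2 j,
       dec sc k1 k2 d (mir sc k1 d (enc sc d W) W) W j = W (d (k1, k2)) j).

Definition load1 (K1 K2 N F L : nat) (sc : hscheme K1 K2 N F L) : rat :=
  (\max_(d : demand K1 K2 N) S1 sc d)%N%:R / F%:R.
Definition load2 (K1 K2 N F L : nat) (sc : hscheme K1 K2 N F L) : rat :=
  (\max_(k1 : 'I_K1) \max_(d : demand K1 K2 N) S2 sc k1 d)%N%:R / F%:R.

(* Main.v *)
Require Import Defs.
From HB Require Import structures.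
From mathcomp Require Import all_boot all_order all_algebra.
From mathcomp Require Import finmap.
From Stdlib Require Import FunctionalExtensionality.
From mathcomp Require Import ring.
Import Order.TTheory GRing.Theory Num.Theory.
Set Implicit Arguments. Unset Strict Implicit. Unset Printing Implicit Defensive.
Local Open Scope ring_scope.

Section Aux.
Variables (K1 K2 F N L : nat) (P0 : 'I_F -> 'I_K1 -> bool)
  (P : 'I_K1 -> 'I_F -> 'I_K2 -> option int).

Definition Pt (t : 'I_K1 * 'I_F * 'I_K2) := P t.1.1 t.1.2 t.2.
Definition wt (d : demand K1 K2 N) (W : files N F L) (t : 'I_K1 * 'I_F * 'I_K2)
  : packet L := W (d (t.1.1, t.2)) t.1.2.
Definition lookup n (e : seq int) (X : 'I_n -> packet L) (s : int) : packet L :=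
  \sum_(i : 'I_n | nth 0%R e i == s) X i.
Definition Xval d W (s : int) : packet L := \sum_(t | Pt t == Some s) wt d W t.
Definition Vk k1 d W (s : int) : packet L :=
  \sum_(t | (Pt t == Some s) && ((t.1.1 == k1) || ~~ P0 t.1.2 k1)) wt d W t.
End Aux.

Lemma lookup_uniq L (e : seq int) (X : 'I_(size e) -> packet L) (f : int -> packet L) s :
  uniq e -> s \in e -> (forall i : 'I_(size e), X i = f (nth 0%R e i)) ->
  lookup e X s = f s.
Proof.
move=> ue se HX; rewrite /lookup.
have ilt : (index s e < size e)%N by rewrite index_mem.
rewrite (eq_bigl (pred1 (Ordinal ilt))); last first.
  move=> i /=; apply/eqP/eqP => [H|->]; last by rewrite /= nth_index.
  by apply: val_inj => /=; rewrite -H index_uniq.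
by rewrite big_pred1_eq HX /= nth_index.
Qed.

Section Scheme.
Variables (K1 K2 F N L : nat) (Sm : {fset int}) (Ss : 'I_K1 -> {fset int})
  (P0 : 'I_F -> 'I_K1 -> bool) (P : 'I_K1 -> 'I_F -> 'I_K2 -> option int).

Definition Uset : {fset int} := (\big[fsetU/fset0]_(k1 < K1) Ss k1)%fset.
Definition eU : seq int := enum_fset (Uset `\` Sm)%fset.
Definition eS (k1 : 'I_K1) : seq int := enum_fset (Ss k1).

Definition encf (d : demand K1 K2 N) (W : files N F L) (i : 'I_(size eU)) : packet L :=
  Xval P d W (nth 0%R eU i).

Definition mirf (k1 : 'I_K1) (d : demand K1 K2 N) (X : 'I_(size eU) -> packet L)
  (W : files N F L) (i : 'I_(size (eS k1))) : packet L :=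
  let s := nth 0%R (eS k1) i in
  if s \in Sm then \sum_(t | (Pt P t == Some s) && (t.1.1 == k1)) wt d W t
  else lookup eU X s -
       \sum_(t | (Pt P t == Some s) && ((t.1.1 != k1) && P0 t.1.2 k1)) wt d W t.

Definition decf (k1 : 'I_K1) (k2 : 'I_K2) (d : demand K1 K2 N)
  (Y : 'I_(size (eS k1)) -> packet L) (W : files N F L) (j : 'I_F) : packet L :=
  match P k1 j k2 with
  | None => W (d (k1, k2)) j
  | Some s => lookup (eS k1) Y s -
      \sum_(t | ((Pt P t == Some s) && ((t.1.1 == k1) || ~~ P0 t.1.2 k1))
                 && (t != (k1, j, k2))) wt d W t
  end.

Definition mkScheme : hscheme K1 K2 N F L :=
  @HScheme K1 K2 N F L (fun k1 => [set p : 'I_N * 'I_F | P0 p.2 k1])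
    (fun k1 k2 => [set p : 'I_N * 'I_F | P k1 p.2 k2 == None])
    (fun _ => size eU) (fun k1 _ => size (eS k1))
    encf mirf decf.
End Scheme.
Arguments mirf {K1 K2 F N L} Sm Ss P0 P k1 d X W i.
Arguments encf {K1 K2 F N L} Sm Ss P d W i.
Arguments decf {K1 K2 F N L} Ss P0 P k1 k2 d Y W j.

Lemma maxconst (T : finType) (x : T) (c : nat) : (\max_(i : T) c)%N = c.
Proof.
apply/eqP; rewrite eqn_leq; apply/andP; split; first by apply/bigmax_leqP.
exact: (@leq_bigmax_cond T predT (fun _ => c) x).
Qed.

Lemma card_prod (N F : nat) (f : 'I_F -> bool) :
  #|[set p : 'I_N * 'I_F | f p.2]| = (N * #|[set j | f j]|)%N.
Proof.
have -> : [set p : 'I_N * 'I_F | f p.2] = setX [set: 'I_N] [set j | f j].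
  by apply/setP => -[n j]; rewrite !inE.
by rewrite cardsX cardsT card_ord.
Qed.

Lemma mem_bound (M : rat) (N F Z L : nat) : (0 < N)%N -> (0 < F)%N ->
  M / N%:R = Z%:R / F%:R -> ((N * Z * L)%N%:R <= M * (F * L)%N%:R).
Proof.
move=> Np Fp HM.
have N0 : (N%:R : rat) != 0 by rewrite pnatr_eq0 -lt0n.
have F0 : (F%:R : rat) != 0 by rewrite pnatr_eq0 -lt0n.
have -> : M = Z%:R / F%:R * N%:R by rewrite -HM divfK.
rewrite le_eqVlt; apply/orP; left; apply/eqP; rewrite !natrM.
by field.
Qed.

Theorem theorem1 (K1 K2 F Z1 Z2 : nat) (Sm : {fset int})
    (Ss : 'I_K1 -> {fset int}) (P0 : 'I_F -> 'I_K1 -> bool)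
    (P : 'I_K1 -> 'I_F -> 'I_K2 -> option int) :
  is_HPDA Z1 Z2 Sm Ss P0 P ->
  forall N : nat, (K1 * K2 <= N)%N ->
  forall M1 M2 : rat,
    M1 / N%:R = Z1%:R / F%:R -> M2 / N%:R = Z2%:R / F%:R ->
  forall B : nat, (0 < B)%N -> (F %| B)%N ->
  exists sc : hscheme K1 K2 N F (B %/ F),
    valid_hscheme M1 M2 sc /\
    (forall k1 : 'I_K1, ZM sc k1 = [set p : 'I_N * 'I_F | P0 p.2 k1]) /\
    (forall (k1 : 'I_K1) (k2 : 'I_K2),
        ZU sc k1 k2 = [set p : 'I_N * 'I_F | P k1 p.2 k2 == None]) /\
    load1 sc = ((#|` (\big[fsetU/fset0]_(k1 < K1) Ss k1)%fset |)%:R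
                 - (#|` Sm|)%:R) / F%:R /\
    load2 sc = (\max_(k1 < K1) #|` Ss k1|)%N%:R / F%:R.
Proof.
move=> [[K1p K2p Fp Z1p Z2p] [Z1F [Z2F [B1 [B2 [B3a [B3b B4]]]]]]] N KN M1 M2 HM1 HM2 B Bp FB.
set L := (B %/ F)%N.
have Np : (0 < N)%N by apply: leq_trans KN; rewrite muln_gt0 K1p.
have inU : forall k1 s, s \in Ss k1 -> s \in Uset Ss.
  by move=> k1 s Hs; rewrite /Uset (bigD1 k1) //= in_fsetU Hs.
have SmU : (Sm `<=` Uset Ss)%fset.
  apply/fsubsetP => s /B3a [k1 [[j [k2 Hjk]] _]].
  have [_ [Hent _]] := B2 k1; exact: inU k1 s (Hent _ _ _ Hjk).
have memS : forall k1 (i : 'I_(size (eS Ss k1))), nth 0%R (eS Ss k1) i \in Ss k1.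
  by move=> k1 i; rewrite -[_ \in Ss k1]/(_ \in eS Ss k1) mem_nth.
have mirC : forall k1 d (W : files N F L) (i : 'I_(size (eS Ss k1))),
    mirf Sm Ss P0 P k1 d (encf Sm Ss P d W) W i
    = Vk P0 P k1 d W (nth 0%R (eS Ss k1) i).
  move=> k1 d W i; rewrite /mirf; set s := nth _ _ _.
  have sS := memS k1 i.
  case: ifP => sSm.
    rewrite /Vk; apply: eq_bigl => t.
    case: eqP => //= Ht.
    have [x [_ Hx]] := B3a s sSm.
    have [_ [_ [_ [HC2 _]]]] := B2 k1.
    have [j [k2 Hjk]] := HC2 s sS.
    have e1 := Hx k1 (ex_intro _ j (ex_intro _ k2 Hjk)).
    have e2 := Hx t.1.1 (ex_intro _ t.1.2 (ex_intro _ t.2 Ht)).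
    by rewrite -e1 -e2 eqxx.
  rewrite (@lookup_uniq L (eU Sm Ss) _ (Xval P d W)); last first.
  - by move=> i'.
  - by rewrite -[_ \in eU Sm Ss]/(_ \in (Uset Ss `\` Sm)%fset) in_fsetD sSm (inU k1).
  - exact: fset_uniq.
  rewrite /Xval (bigID (fun t => (t.1.1 != k1) && P0 t.1.2 k1)) /= addrC addrK /Vk.
  by apply: eq_bigl => t; rewrite negb_and negbK.
have decC : forall k1 k2 d (W : files N F L) j,
    decf Ss P0 P k1 k2 d (mirf Sm Ss P0 P k1 d (encf Sm Ss P d W) W) W j
    = W (d (k1, k2)) j.
  move=> k1 k2 d W j; rewrite /decf.
  case Hj: (P k1 j k2) => [s|//].
  have [_ [Hent _]] := B2 k1.
  rewrite (@lookup_uniq L (eS Ss k1) _ (Vk P0 P k1 d W)); last first.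
  - by move=> i'; rewrite mirC.
  - by rewrite -[_ \in eS Ss k1]/(_ \in Ss k1) (Hent _ _ _ Hj).
  - exact: fset_uniq.
  rewrite /Vk (bigD1 (k1, j, k2)) /=; last by rewrite /Pt /= Hj !eqxx.
  by rewrite addrK.
have dN : demand K1 K2 N := [ffun _ => Ordinal Np].
exists (@mkScheme K1 K2 F N L Sm Ss P0 P).
split; last first.
  split => //; split => //; split.
    rewrite /load1 /= (maxconst dN) /eU -/(#|` (Uset Ss `\` Sm)%fset|).
    by rewrite (cardfsDS SmU) natrB // fsubset_leq_card.
  rewrite /load2 /=; congr (_%:R / _); apply: eq_bigr => k1 _.
  exact: maxconst.
split.
  move=> k1; rewrite /= (card_prod N (fun j => P0 j k1)) B1; exact: mem_bound.
split.
  move=> k1 k2; rewrite /= (card_prod N (fun j => P k1 j k2 == None)); have [_ [_ [-> _]]] := B2 k1; exact: mem_bound.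
split.
  move=> k1 d X W W' HW; apply: functional_extensionality => i.
  rewrite /= /mirf; set s := nth _ _ _.
  case: ifP => sSm.
    apply: eq_bigr => t /andP [/eqP Ht /eqP Hk].
    apply: (HW (d (t.1.1, t.2), t.1.2)); rewrite inE /= -Hk.
    exact: B3b Ht sSm.
  congr (_ - _); apply: eq_bigr => t /andP [_ /andP [_ Hp]].
  by apply: (HW (d (t.1.1, t.2), t.1.2)); rewrite inE /=.
split; last by move=> d W k1 k2 j; exact: decC.
move=> k1 k2 d Y W W' HW; apply: functional_extensionality => j.
rewrite /= /decf.
case Hj: (P k1 j k2) => [s|]; last by apply: (HW (d (k1, k2), j)); rewrite inE /= Hj.
congr (_ - _); apply: eq_bigr => -[[k1' j'] k2'] /andP [/andP [/eqP Ht Hor] Hne].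
apply: (HW (d (k1', k2'), j')); rewrite inE /=.
rewrite /Pt /= in Ht.
case: (eqVneq k1' k1) => [Ek|Hk].
  subst k1'.
  have [_ [_ [_ [_ HC3]]]] := B2 k1.
  have Hne' : (j, k2) != (j', k2').
    apply: contra Hne => /eqP [-> ->]; by [].
  by have [_ _ _ ->] := HC3 j j' k2 k2' s Hj Ht Hne'.
rewrite /= (negbTE Hk) /= in Hor.
have Hk' : k1 != k1' by rewrite eq_sym.
have [H1 _] := B4 k1 k1' j j' k2 k2' s Hk' Hj Ht.
case E: (P k1 j' k2) => [u|] //.
by have := H1 (ex_intro _ u E); rewrite (negbTE Hor).
Qed.
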